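(* In the setting below, assume $\int_{\bar B_R}|\eta|\,d\mu<\infty$, $\mu(\{x\})=0$ and $\int_{\bar B_r}|\eta-\eta(x)|\,d\mu>0$ for all $r>0$. Then $x$ is a Lebesgue point for $\eta$ with respect to $\mu$ if and only if there exist $\alpha\in(0,1)$ and an $\alpha$-sequence $(r_m)_{m\ge m_1}$ at $x$ such that $x$ is a Lebesgue point along $(r_m)_{m\ge m_1}$.
   Context: Let $(\mathcal{X},d)$ be a metric space with Borel $\sigma$-algebra, $\eta:\mathcal{X}\to\mathbb{R}$ measurable, and $\mu$ a Borel measure on $\mathcal{X}$. Fix $x\in\mathcal{X}$ with $\mu(\bar B_r)>0$ for all $r>0$, where $\bar B_r=\{x':d(x,x')\le r\}$, and fix $R>0$ with $\mu(\bar B_R)<\infty$. The point $x$ is a Lebesgue point for $\eta$ with respect to $\mu$ if $\frac{1}{\mu(\bar B_r)}\int_{\bar B_r}|\eta-\eta(x)|\,d\mu\to0$ as $r\to0^+$; for a sequence of strictly positive numbers $\rho_m\to0$, $x$ is a Lebesgue point along $(\rho_m)$ if $\frac{1}{\mu(\bar B_{\rho_m})}\int_{\bar B_{\rho_m}}|\eta-\eta(x)|\,d\mu\to0$ as $m\to\infty$. For $\alpha\in(0,1)$ and $r>0$ let $M(r)=\big(\int_{\bar B_r}|\eta-\eta(x)|\,d\mu\big)^{\alpha}\big(\mu(\bar B_r)\big)^{1-\alpha}$; choose $R_1\in(0,R)$ with $M(R_1)<M(R)$, let $m_1=\lceil 1/M(R_1)\rceil$, and for integers $m\ge m_1$ let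 $r_m=\sup\{r>0:M(r)<1/m\}$. Any sequence $(r_m)_{m\ge m_1}$ so obtained is called an $\alpha$-sequence at $x$. *)

(* Defs.v *)
From HB Require Import structures.
From mathcomp Require Import all_boot all_order all_algebra.
From mathcomp Require Import all_classical all_reals all_analysis.
Set Implicit Arguments. Unset Strict Implicit. Unset Printing Implicit Defensive.
Import Order.TTheory GRing.Theory Num.Theory.
Import numFieldNormedType.Exports.
Local Open Scope classical_set_scope.
Local Open Scope ring_scope.

Definition is_metric (R : realType) (X : Type) (dist : X -> X -> R) :=
  [/\ forall x y, 0 <= dist x y,
      forall x y, dist x y = 0 <-> x = y,
      forall x y, dist x y = dist y x &
      forall x y z, dist x z <= dist x y + dist y z].

Definition metric_open (R : realType) (X : Type) (dist : X -> X -> R) (A : set X) :=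
  forall a, A a -> exists e : R, 0 < e /\ [set y | dist a y < e] `<=` A.

Definition borel_for (R : realType) (d : measure_display) (X : measurableType d)
  (dist : X -> X -> R) :=
  (@measurable d X) = <<s metric_open dist >>.

Definition cball (R : realType) (X : Type) (dist : X -> X -> R) (x : X) (r : R) :
  set X := [set y | dist x y <= r].

Section defs.
Context (R : realType) (d : measure_display) (X : measurableType d)
  (dist : X -> X -> R) (mu : {measure set X -> \bar R}) (eta : X -> R) (x : X).

Definition dev_int (r : R) : \bar R :=
  (\int[mu]_(y in cball dist x r) (`|eta y - eta x|)%:E)%E.

Definition avg_dev (r : R) : R := fine (dev_int r) / fine (mu (cball dist x r)).

Definition lebesgue_point : Prop := avg_dev r @[r --> 0^'+] --> 0.

Definition lebesgue_point_along (rho : nat -> R) : Prop :=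
  [/\ forall m, 0 < rho m, rho @ \oo --> 0 & (fun m => avg_dev (rho m)) @ \oo --> 0].

Definition Mfun (alpha r : R) : \bar R :=
  (poweR (dev_int r) alpha * poweR (mu (cball dist x r)) (1 - alpha))%E.

Definition m_one (alpha R1 : R) : nat := `|Num.ceil (fine (Mfun alpha R1))^-1|%N.

Definition r_seq (alpha : R) (m : nat) : R :=
  sup [set r : R | 0 < r /\ (Mfun alpha r < (m%:R^-1)%:E)%E].

(* (r_m)_{m >= m_1} is an alpha-sequence at x (for radius Rad), re-indexed from 0:
   the returned sequence n |-> r_{n + m_1} *)
Definition is_alpha_sequence (alpha Rad : R) (rho : nat -> R) : Prop :=
  exists R1 : R, [/\ 0 < R1, R1 < Rad, (Mfun alpha R1 < Mfun alpha Rad)%E &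
    rho = (fun n => r_seq alpha (n + m_one alpha R1)%N)].

End defs.

(* Main.v *)
Require Import Defs.
From HB Require Import structures.
From mathcomp Require Import all_boot all_order all_algebra.
From mathcomp Require Import all_classical all_reals all_analysis.
From mathcomp Require Import measurable_realfun.
From mathcomp Require Import lra.
Import Order.TTheory GRing.Theory Num.Theory.
Import numFieldNormedType.Exports.
Local Open Scope classical_set_scope.
Local Open Scope ring_scope.

Definition imeas (R : realType) (d : measure_display) (T : measurableType d)
  (mu : {measure set T -> \bar R}) (f : T -> R) (A : set T) : \bar R :=
  (\int[mu]_(y in A) (`|f y|)%:E)%E.
Arguments imeas {R d T}.

Lemma imeas0 (R : realType) (d : measure_display) (T : measurableType d)
  (mu : {measure set T -> \bar R}) (f : T -> R) : imeas mu f set0 = 0%E.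
Proof. by rewrite /imeas integral_set0. Qed.

Lemma imeas_ge0 (R : realType) (d : measure_display) (T : measurableType d)
  (mu : {measure set T -> \bar R}) (f : T -> R) A : (0 <= imeas mu f A)%E.
Proof. by apply: integral_ge0 => y _; rewrite lee_fin. Qed.

Lemma imeas_sigma_additive (R : realType) (d : measure_display) (T : measurableType d)
  (mu : {measure set T -> \bar R}) (f : T -> R) (mf : measurable_fun setT f) :
  semi_sigma_additive (imeas mu f).
Proof.
move=> /= F mF tF mUF.
have mf' : measurable_fun (\bigcup_k F k) (fun y => (`|f y|)%:E : \bar R).
  apply: measurable_funTS; apply/measurable_EFinP.
  exact: measurableT_comp.
rewrite /imeas (ge0_integral_bigcup mu mF mf')//=.
apply: is_cvg_ereal_nneg_natsum_cond => n _ _.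
by apply: integral_ge0 => y _; rewrite lee_fin.
Qed.

Definition nuf (R : realType) (d : measure_display) (T : measurableType d)
  (mu : {measure set T -> \bar R}) (f : T -> R) (mf : measurable_fun setT f)
  : set T -> \bar R := imeas mu f.
Arguments nuf {R d T}.
Arguments imeas0 {R d T}.
Arguments imeas_ge0 {R d T}.
Arguments imeas_sigma_additive {R d T}.
HB.instance Definition _ (R : realType) (d : measure_display) (T : measurableType d)
  (mu : {measure set T -> \bar R}) (f : T -> R) (mf : measurable_fun setT f) :=
  isMeasure.Build _ _ _ (nuf mu f mf)
  (imeas0 mu f) (imeas_ge0 mu f) (imeas_sigma_additive mu f mf).

Lemma cball_meas (R : realType) (d : measure_display) (X : measurableType d)
  (dist : X -> X -> R) (x : X) (r : R) :
  is_metric dist -> borel_for dist -> measurable (cball dist x r).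
Proof.
move=> [d0 d00 dsym dtri] hb; rewrite hb.
rewrite -(setCK (cball dist x r)); apply: sigma_algebraC.
apply: sub_sigma_algebra => a /= ha.
have ha' : r < dist x a by rewrite ltNge; apply/negP.
exists (dist x a - r); split; first by rewrite subr_gt0.
move=> y /= hy; apply/negP; rewrite -ltNge.
have := dtri x y a; rewrite (dsym y a) => h.
by rewrite -(ltrD2r (dist a y)); apply: (lt_le_trans _ h); rewrite -ltrBrDl.
Qed.

Lemma powR_cvg_seq (R : realType) (u : R^nat) (b p : R) : 0 < b -> u @ \oo --> b ->
  (fun k => powR (u k) p) @ \oo --> powR b p.
Proof.
move=> b0 ub.
have ev := cvgr_gt _ ub _ b0.
have e : {near \oo, (fun k => expR (p * ln (u k))) =1 (fun k => powR (u k) p)}.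
  near=> k; rewrite /powR gt_eqF //; near: k; exact: ev.
apply: cvg_trans (near_eq_cvg e) _.
rewrite /powR (gt_eqF b0).
apply: (@continuous_cvg _ _ _ _ _ (fun k => p * ln (u k)) expR).
  exact: continuous_expR.
apply: cvgM; first exact: cvg_cst.
apply: (continuous_cvg _ _ ub).
exact: continuous_ln.
Unshelve. all: by end_near.
Qed.

Lemma near0r_elim (R : realType) (P : R -> Prop) : (\forall t \near 0^'+, P t) ->
  exists2 d, 0 < d & forall t, 0 < t -> t < d -> P t.
Proof.
move=> /nbhs_ballP [d d0 h]; exists d => // t t0 td; apply: h => //.
by rewrite /ball /= sub0r normrN gtr0_norm.
Qed.

Lemma near0r_intro (R : realType) (P : R -> Prop) d : 0 < d ->
  (forall t, 0 < t -> t < d -> P t) -> (\forall t \near 0^'+, P t).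
Proof.
move=> d0 h; apply/nbhs_ballP; exists d => // t /= td t0; apply: h => //.
by move: td; rewrite /ball /= sub0r normrN gtr0_norm.
Qed.

Section main.
Context (R : realType) (d : measure_display) (X : measurableType d)
  (dist : X -> X -> R) (mu : {measure set X -> \bar R}) (eta : X -> R) (x : X) (Rad : R).
Hypothesis hmet : is_metric dist.
Hypothesis hb : borel_for dist.
Hypothesis meta : measurable_fun setT eta.
Hypothesis Vpos : forall r : R, 0 < r -> (0 < mu (cball dist x r))%E.
Hypothesis Rad0 : 0 < Rad.
Hypothesis Vfin : (mu (cball dist x Rad) < +oo)%E.
Hypothesis Ifin0 : (\int[mu]_(y in cball dist x Rad) (`|eta y|)%:E < +oo)%E.
Hypothesis mux : mu [set x] = 0%E.
Hypothesis Ipos : forall r : R, 0 < r -> (0 < dev_int dist mu eta x r)%E.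

Local Notation B := (cball dist x).
Definition gg := fun y => eta y - eta x.
Lemma mgg : measurable_fun setT gg.
Proof. exact: measurable_funB meta (measurable_cst _). Qed.

Definition nu : {measure set X -> \bar R} := nuf mu gg mgg.

Lemma devE r : dev_int dist mu eta x r = nu (B r).
Proof. by []. Qed.

Lemma mB r : measurable (B r).
Proof. exact: cball_meas. Qed.

Lemma le_meas (m : {measure set X -> \bar R}) r s : r <= s -> (m (B r) <= m (B s))%E.
Proof.
move=> rs; apply: le_measure; rewrite ?inE; try exact: mB.
by move=> y /= h; apply: le_trans rs.
Qed.

Arguments le_meas m {r s}.

Lemma nuRad : (nu (B Rad) < +oo)%E.
Proof.
change (imeas mu gg (B Rad) < +oo)%E; rewrite /imeas.
apply: (@le_lt_trans _ _ (\int[mu]_(y in B Rad) ((`|eta y|)%:E + (`|eta x|)%:E))%E).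
  apply: ge0_le_integral; first exact: mB.
  - by move=> y _; rewrite lee_fin.
  - apply/measurable_EFinP; apply: measurableT_comp => //.
    apply: measurable_funTS; exact: mgg.
  - apply: emeasurable_funD; last exact: measurable_cst.
    apply/measurable_EFinP; apply: measurableT_comp => //.
    exact: measurable_funTS.
  - by move=> y _; rewrite /gg -EFinD lee_fin ler_normB.
rewrite ge0_integralD; first last.
- exact: measurable_cst.
- by move=> y _; rewrite lee_fin.
- apply/measurable_EFinP; apply: measurableT_comp => //.
  exact: measurable_funTS.
- by move=> y _; rewrite lee_fin.
- exact: mB.
rewrite integral_cst; last exact: mB.
rewrite lte_add_pinfty //.
have hf : mu (B Rad) \is a fin_num by rewrite ge0_fin_numE.
by rewrite -(fineK hf) -EFinM ltry.
Qed.

Definition Vr r := fine (mu (B r)).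
Definition Ir r := fine (nu (B r)).

Lemma fin_V r : r <= Rad -> mu (B r) = (Vr r)%:E.
Proof.
move=> rR; rewrite /Vr fineK // ge0_fin_numE //.
exact: le_lt_trans (le_meas mu rR) Vfin.
Qed.

Lemma fin_I r : r <= Rad -> nu (B r) = (Ir r)%:E.
Proof.
move=> rR; rewrite /Ir fineK // ge0_fin_numE //.
exact: le_lt_trans (le_meas nu rR) nuRad.
Qed.

Lemma Vr_ge0 r : 0 <= Vr r.
Proof. exact: fine_ge0. Qed.

Lemma Ir_ge0 r : 0 <= Ir r.
Proof. exact: fine_ge0. Qed.

Lemma Vr_gt0 r : 0 < r -> r <= Rad -> 0 < Vr r.
Proof. by move=> r0 rR; have := Vpos _ r0; rewrite fin_V // lte_fin. Qed.

Lemma Ir_gt0 r : 0 < r -> r <= Rad -> 0 < Ir r.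
Proof. by move=> r0 rR; have := Ipos _ r0; rewrite devE fin_I // lte_fin. Qed.

Lemma Vr_le r s : r <= s -> s <= Rad -> Vr r <= Vr s.
Proof.
move=> rs sR; have := le_meas mu rs.
by rewrite fin_V ?(le_trans rs) // fin_V // lee_fin.
Qed.

Lemma Ir_le r s : r <= s -> s <= Rad -> Ir r <= Ir s.
Proof.
move=> rs sR; have := le_meas nu rs.
by rewrite fin_I ?(le_trans rs) // fin_I // lee_fin.
Qed.

Lemma B0 : B 0 = [set x].
Proof.
case: hmet => d0 d00 _ _.
apply/seteqP; split => y /=.
  by move=> h; apply/esym; apply/d00; apply/le_anti; rewrite h d0.
by move=> ->; rewrite /cball /= (proj2 (d00 x x) erefl).
Qed.

Lemma Vr0 : Vr 0 = 0.
Proof. by rewrite /Vr B0 mux. Qed.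

Definition tt_ (s : R) (k : nat) := s + (Rad - s) * k.+1%:R^-1.

Lemma tt_ge s k : s <= Rad -> s <= tt_ s k.
Proof. by move=> sR; rewrite /tt_ lerDl mulr_ge0 // subr_ge0. Qed.

Lemma tt_le s k : s <= Rad -> tt_ s k <= Rad.
Proof.
move=> sR; rewrite /tt_ -lerBrDl ler_piMr ?subr_ge0 //.
by rewrite invf_le1 // ler1n.
Qed.

Lemma tt_lt s k : s < Rad -> tt_ s k.+1 < Rad.
Proof.
move=> sR; rewrite /tt_ -ltrBrDl gtr_pMr ?subr_gt0 //.
by rewrite invf_lt1 // ltr1n.
Qed.

Lemma rc (m : {measure set X -> \bar R}) s : (m (B Rad) < +oo)%E -> s < Rad ->
  (fun k => fine (m (B (tt_ s k)))) @ \oo --> fine (m (B s)).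
Proof.
move=> mfin sR.
have cap : \bigcap_k B (tt_ s k) = B s.
  apply/seteqP; split => y /=.
  - move=> h; rewrite /cball /= leNgt; apply/negP => hy.
    have e0 : 0 < (dist x y - s) / (Rad - s) by rewrite divr_gt0 // subr_gt0.
    have [N _ hN] := near_infty_natSinv_lt (PosNum e0).
    have := hN N (leqnn N) => /= hN'.
    have := h N I; rewrite /cball /= /tt_ -lerBlDl => h2. 
    have : (Rad - s) * N.+1%:R^-1 < dist x y - s.
      by rewrite mulrC -ltr_pdivlMr ?subr_gt0.
    by rewrite ltNge h2.
  - move=> h k _; apply: le_trans h _; apply: tt_ge; exact: ltW.
have mono : nonincreasing_seq (fun k => B (tt_ s k)).
  move=> n k nk; apply/subsetPset => y /= h; apply: le_trans h _.
  rewrite /tt_ lerD2l ler_wpM2l ?subr_ge0 ?(ltW sR) //.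
  by rewrite lef_pV2 ?ler_nat ?posrE.
have := @nonincreasing_cvg_mu _ _ _ m (fun k => B (tt_ s k)).
rewrite cap => h.
have hf : m (B s) \is a fin_num.
  rewrite ge0_fin_numE //; apply: le_lt_trans (le_meas m (ltW sR)) mfin.
have h' : m \o (fun k => B (tt_ s k)) @ \oo --> (fine (m (B s)))%:E.
  rewrite fineK //; apply: h => //.
  - by apply: le_lt_trans (le_meas m (@tt_le s 0 (ltW sR))) mfin.
  - by move=> k; exact: mB.
  - by rewrite -cap; apply: bigcapT_measurable => k; exact: mB.
exact: (fine_cvg h').
Qed.

Lemma tt_gt0 s k : 0 <= s -> s < Rad -> 0 < tt_ s k.
Proof.
move=> s0 sR; rewrite /tt_ ltr_wpDl // mulr_gt0 ?subr_gt0 //.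

Qed.

Definition Mr a r := powR (Ir r) a * powR (Vr r) (1 - a).

Lemma MfunE a r : r <= Rad -> Mfun dist mu eta x a r = (Mr a r)%:E.
Proof. by move=> rR; rewrite /Mfun devE fin_I // fin_V // !poweR_EFin -EFinM. Qed.

Lemma Mfun_mono a r s : 0 <= a <= 1 -> r <= s ->
  (Mfun dist mu eta x a r <= Mfun dist mu eta x a s)%E.
Proof.
move=> /andP[a0 a1] rs; rewrite /Mfun.
apply: lee_pmul; try exact: poweR_ge0.
- apply: gt0_ler_poweR => //; rewrite ?in_itv /= ?devE ?measure_ge0 ?leey //.
  exact: le_meas.
- apply: gt0_ler_poweR; rewrite ?subr_ge0 //; rewrite ?in_itv /= ?measure_ge0 ?leey //.
  exact: le_meas.
Qed.

Lemma Mr_gt0 a r : 0 < r -> r <= Rad -> 0 < Mr a r.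
Proof.
move=> r0 rR; rewrite /Mr mulr_gt0 // powR_gt0 //; [exact: Ir_gt0 | exact: Vr_gt0].
Qed.

Lemma Mr_cvg a s : 0 < s -> s < Rad -> (fun k => Mr a (tt_ s k)) @ \oo --> Mr a s.
Proof.
move=> s0 sR.
have hI : (fun k => Ir (tt_ s k)) @ \oo --> Ir s := rc nu s nuRad sR.
have hV : (fun k => Vr (tt_ s k)) @ \oo --> Vr s := rc mu s Vfin sR.
have := cvgM (@powR_cvg_seq R _ _ a (@Ir_gt0 s s0 (ltW sR)) hI)
             (@powR_cvg_seq R _ _ (1 - a) (@Vr_gt0 s s0 (ltW sR)) hV).
by apply.
Qed.

Lemma Mr_small a c : 0 < a < 1 -> 0 < c ->
  exists r, [/\ 0 < r, r < Rad & (Mfun dist mu eta x a r < c%:E)%E].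
Proof.
move=> /andP[a0 a1] c0.
set K := powR (Ir Rad) a.
have K0 : 0 <= K by exact: powR_ge0.
have K10 : 0 < K + 1 by rewrite ltr_wpDl.
set c' := c / (K + 1).
have c'0 : 0 < c' by rewrite divr_gt0.
set dd := powR c' (1 - a)^-1.
have dd0 : 0 < dd by exact: powR_gt0.
have hV := rc mu 0 Vfin Rad0.
change ((fun k => Vr (tt_ 0 k)) @ \oo --> Vr 0) in hV; rewrite Vr0 in hV.
have [N _ hN] := cvgr_lt _ hV _ dd0.
exists (tt_ 0 N.+1); split.
- by apply: tt_gt0.
- exact: tt_lt.
set t := tt_ 0 N.+1.
have tR : t <= Rad by apply: ltW; apply: tt_lt.
rewrite MfunE // lte_fin.
have hv : Vr t < dd by apply: hN => /=; apply: leqnSn.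
have p1 : powR (Ir t) a <= K.
  apply: ge0_ler_powR; rewrite ?nnegrE ?Ir_ge0 ?(ltW a0) //.
  exact: Ir_le.
have p2 : powR (Vr t) (1 - a) < c'.
  have := @gt0_ltr_powR _ (1 - a) _ (Vr t) dd; rewrite subr_gt0 => /(_ a1).
  rewrite !nnegrE Vr_ge0 (ltW dd0) => /(_ isT isT hv).
  by rewrite /dd -powRrM mulVf ?powRr1 ?(ltW c'0) // subr_eq0 eq_sym lt_eqF.
apply: (@le_lt_trans _ _ (K * c')).
  rewrite /Mr; apply: (@le_trans _ _ (K * powR (Vr t) (1 - a))).
    by apply: ler_wpM2r => //; exact: powR_ge0.
  by apply: ler_wpM2l => //; exact: ltW.
rewrite /c' mulrA ltr_pdivrMr // mulrC ltr_pM2l // ltrDl //.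
Qed.

Section alpha.
Variables (a R1 : R).
Hypothesis a0 : 0 < a.
Hypothesis a1 : a < 1.
Hypothesis R10 : 0 < R1.
Hypothesis R1R : R1 < Rad.

Local Notation M := (Mfun dist mu eta x a).
Local Notation m1 := (m_one dist mu eta x a R1).
Local Notation S m := [set r : R | 0 < r /\ (M r < (m%:R^-1)%:E)%E].
Local Notation rs := (r_seq dist mu eta x a).

Lemma a01 : 0 <= a <= 1.
Proof. by rewrite (ltW a0) (ltW a1). Qed.

Lemma m1_ge m : (m1 <= m)%N -> 0 < m%:R :> R /\ m%:R^-1 <= Mr a R1.
Proof.
move=> hm1.
have c0 : 0 < Mr a R1 by apply: Mr_gt0 => //; exact: ltW.
have ci0 : 0 < (Mr a R1)^-1 by rewrite invr_gt0.
have hc : (Mr a R1)^-1 <= m1%:R.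
  rewrite /m_one MfunE ?(ltW R1R) //=.
  have cg := ceil_ge (Mr a R1)^-1.
  have cz : (0 <= Num.ceil (Mr a R1)^-1)%R.
    by rewrite -(ler_int R) (le_trans (ltW ci0)).
  by rewrite natr_absz ger0_norm.
have hmm : (Mr a R1)^-1 <= m%:R by apply: le_trans hc _; rewrite ler_nat.
have m0 : 0 < m%:R :> R by apply: lt_le_trans hmm.
split => //.
by rewrite invf_ple ?posrE.
Qed.

Lemma m1_pos : (0 < m1)%N.
Proof. by have [h _] := m1_ge m1 (leqnn m1); rewrite ltr0n in h. Qed.

Lemma S_sub m r : (m1 <= m)%N -> 0 < r -> (M r < (m%:R^-1)%:E)%E -> r < R1.
Proof.
move=> hm r0 hr; rewrite ltNge; apply/negP => Rr.
have := Mfun_mono a R1 r a01 Rr.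
rewrite (MfunE a R1 (ltW R1R)) => h.
have [_ h2] := m1_ge m hm.
have := le_lt_trans h hr; rewrite lte_fin => h3.
by move: (lt_le_trans h3 h2); rewrite ltxx.
Qed.

Lemma S_ub m : (m1 <= m)%N -> ubound (S m) R1.
Proof. by move=> hm r [r0 hr]; apply: ltW; exact: (S_sub m r hm r0 hr). Qed.

Lemma rs_le m : (m1 <= m)%N -> rs m <= R1.
Proof.
move=> hm; rewrite /r_seq.
case: (pselect (S m !=set0)) => [ne|e].
  by apply: ge_sup => //; exact: S_ub m hm.
have -> : S m = set0 by apply/seteqP; split => // r Sr; apply: e; exists r.
by rewrite sup0 ltW.
Qed.

Lemma rs_pos_ne m : 0 < rs m -> S m !=set0.
Proof.
move=> h; apply/set0P/negP => /eqP e.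
by move: h; rewrite /r_seq e sup0 ltxx.
Qed.

Lemma rs_gt m r : (m1 <= m)%N -> 0 < r -> r < rs m -> (M r < (m%:R^-1)%:E)%E.
Proof.
move=> hm r0 hr.
have ne : S m !=set0 by apply: rs_pos_ne; exact: lt_trans hr.
have [y [y0 hy] ry] := sup_gt ne hr.
apply: le_lt_trans hy; exact: Mfun_mono a r y a01 (ltW ry).
Qed.

Lemma rs_ge m : (m1 <= m)%N -> 0 < rs m -> (((m%:R^-1)%:E) <= M (rs m))%E.
Proof.
move=> hm h0.
have ne := rs_pos_ne m h0.
set s := rs m.
have sR : s < Rad by apply: le_lt_trans (rs_le m hm) R1R.
rewrite leNgt; apply/negP; rewrite MfunE ?(ltW sR) // lte_fin => hs.
have := cvgr_lt _ (Mr_cvg a s h0 sR) _ hs => -[N _ hN].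
have ht := hN N.+1 (leqnSn N).
set t := tt_ s N.+1.
have tR : t <= Rad by apply: ltW; apply: tt_lt.
have st : s < t.
  by rewrite /t /tt_ ltrDl mulr_gt0 ?subr_gt0 // invr_gt0 ltr0n.
have tS : S m t.
  split; first exact: lt_trans st.
  by rewrite MfunE // lte_fin.
have : t <= s.
  by apply: ub_le_sup => //; exists R1; exact: S_ub m hm.
by rewrite leNgt st.
Qed.

Lemma powRE (b p : R) : 0 < b -> powR b p = expR (p * ln b).
Proof. by move=> b0; rewrite /powR gt_eqF. Qed.

Lemma inv_le2 m : (1 <= m)%N -> m%:R^-1 <= 2 * m.+1%:R^-1 :> R.
Proof.
move=> m1'.
have u1 : 1 <= m%:R :> R by rewrite ler1n.
have -> : m.+1%:R = m%:R + 1 :> R by rewrite -addn1 natrD.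
have u0 : 0 < m%:R :> R by lra.
rewrite ler_pdivlMr; last by lra.
rewrite mulrDr mulr1 mulVf ?gt_eqF //.
have : m%:R^-1 <= 1 :> R by rewrite invf_le1.
lra.
Qed.

Lemma key r s m : (1 <= m)%N -> 0 < s -> s <= r -> r <= Rad ->
  Mr a r <= m%:R^-1 -> m.+1%:R^-1 <= Mr a s ->
  Ir r / Vr r <= expR (ln 2 / a) * (Ir s / Vr s).
Proof.
move=> hm s0 sr rR hr hs.
have r0 : 0 < r by apply: lt_le_trans sr.
have sR : s <= Rad by apply: le_trans rR.
have Ir0 := Ir_gt0 r r0 rR; have Vr0' := Vr_gt0 r r0 rR.
have Is0 := Ir_gt0 s s0 sR; have Vs0 := Vr_gt0 s s0 sR.
have h2 : Mr a r <= 2 * Mr a s.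
  apply: le_trans hr _; apply: le_trans (inv_le2 m hm) _.
  by rewrite ler_pM2l.
move: h2; rewrite /Mr !powRE // -!expRD => h2.
have {}h2 : a * ln (Ir r) + (1 - a) * ln (Vr r) <=
    ln 2 + (a * ln (Ir s) + (1 - a) * ln (Vr s)).
  by rewrite -ler_expR expRD lnK ?posrE.
have hv : ln (Vr s) <= ln (Vr r) by rewrite ler_ln ?posrE //; exact: Vr_le.
rewrite -[Ir r]lnK ?posrE // -[Vr r]lnK ?posrE // -[Ir s]lnK ?posrE //.
rewrite -[Vr s]lnK ?posrE // -!expRB -expRD ler_expR.
set ir := ln (Ir r) in h2 *; set vr := ln (Vr r) in h2 hv *.
set is_ := ln (Ir s) in h2 *; set vs := ln (Vr s) in h2 hv *.
set l2 := ln 2 in h2 *.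
have e : a * (l2 / a) = l2 by rewrite mulrCA divff ?gt_eqF // mulr1.
suff hh : a * (ir - vr) <= a * (l2 / a + (is_ - vs)) by rewrite ler_pM2l in hh.
rewrite [X in _ <= X]mulrDr e.
have hv' : 0 <= (1 - a) * (vr - vs) by rewrite mulr_ge0 // subr_ge0 ?(ltW a1).
nra.
Qed.

Lemma backward : lebesgue_point_along dist mu eta x (fun n => rs (n + m1)) ->
  lebesgue_point dist mu eta x.
Proof.
case=> rho0 rhocvg avgcvg.
apply/cvgrPdist_lt => e e0.
set K := expR (ln 2 / a).
have K0 : 0 < K := expR_gt0 _.
have /cvgrPdist_lt/(_ (e / K) (divr_gt0 e0 K0)) [N _ hN] := avgcvg.
apply: (@near0r_intro _ _ (rs (N + m1))) => // t t0 tN.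
have [N2 _ hN2] := cvgr_lt _ rhocvg _ t0.
have ex : exists k, (N <= k)%N && (rs (k + m1) <= t).
  exists (maxn N N2); rewrite leq_maxl /=; apply: ltW; apply: hN2 => /=.
  exact: leq_maxr.
case: (ex_minnP ex) => k /andP[Nk hk] kmin.
have kN : k != N by apply/eqP => kN; move: hk; rewrite kN leNgt tN.
case: k Nk hk kmin kN => [|n] Nk hk kmin kN.
  by move: Nk; rewrite leqn0 => /eqP N0; move: kN; rewrite N0.
have Nn : (N <= n)%N by rewrite -ltnS ltn_neqAle eq_sym kN Nk.
have hn : t < rs (n + m1).
  rewrite ltNge; apply/negP => hle.
  by have := kmin n; rewrite Nn hle => /(_ isT); rewrite ltnn.
have hm1 : (m1 <= n + m1)%N := leq_addl _ _.
have mpos : (1 <= n + m1)%N by apply: leq_trans m1_pos hm1.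
have s0 := rho0 n.+1.
have tR : t <= Rad.
  apply: ltW; apply: lt_le_trans hn _; apply: le_trans (ltW R1R).
  exact: rs_le _ hm1.
have Mt : Mr a t <= (n + m1)%:R^-1.
  have := rs_gt (n + m1) t hm1 t0 hn; rewrite MfunE // lte_fin; exact: ltW.
have Ms : (n + m1).+1%:R^-1 <= Mr a (rs (n.+1 + m1)).
  have := rs_ge (n.+1 + m1) (leq_addl _ _) s0.
  rewrite MfunE ?addSn ?lee_fin //.
  apply: le_trans (ltW R1R); exact: rs_le _ (leq_trans hm1 (leqnSn _)).
have := key t (rs (n.+1 + m1)) (n + m1) mpos s0 hk tR Mt Ms => hkey.
have := hN n.+1 (leq_trans Nn (leqnSn n)) => /=.
rewrite !sub0r !normrN => hs.
have A0 : 0 <= Ir t / Vr t by rewrite divr_ge0 // ?Ir_ge0 ?Vr_ge0.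
change (`|Ir t / Vr t| < e); rewrite ger0_norm //.
apply: le_lt_trans hkey _.
have As0 : 0 <= Ir (rs (n.+1 + m1)) / Vr (rs (n.+1 + m1)) by rewrite divr_ge0 ?Ir_ge0 ?Vr_ge0.
move: hs; change (`|Ir (rs (n.+1 + m1)) / Vr (rs (n.+1 + m1))| < e / K -> K * (Ir (rs (n.+1 + m1)) / Vr (rs (n.+1 + m1))) < e).
rewrite ger0_norm // => hs.
by rewrite mulrC -ltr_pdivlMr.
Qed.

Lemma forward : lebesgue_point dist mu eta x ->
  lebesgue_point_along dist mu eta x (fun n => rs (n + m1)).
Proof.
move=> lp.
have a01' : 0 < a < 1 by rewrite a0 a1.
have rpos : forall n, 0 < rs (n + m1).
  move=> n; set m := n + m1.
  have hm : (m1 <= m)%N := leq_addl _ _.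
  have [mp _] := m1_ge m hm.
  have mi : 0 < m%:R^-1 :> R by rewrite invr_gt0.
  have [r [r0 rR hr]] := Mr_small a (m%:R^-1) a01' mi.
  have Sr : S m r by split.
  apply: lt_le_trans r0 _; apply: ub_le_sup => //; exists R1; exact: S_ub m hm.
have rcvg : (fun n => rs (n + m1)) @ \oo --> 0.
  apply/cvgrPdist_lt => e e0.
  set e' := Num.min (e / 2) R1.
  have e'0 : 0 < e' by rewrite lt_min divr_gt0 ?R10.
  have e'R : e' <= Rad by rewrite ge_min (ltW R1R) orbT.
  have Me := Mr_gt0 a e' e'0 e'R.
  have [N _ hN] := near_infty_natSinv_lt (PosNum Me).
  exists N => // n /= Nn.
  set m := n + m1.
  have hm : (m1 <= m)%N := leq_addl _ _.
  have le : rs m <= e'.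
    apply: ge_sup; first by apply: rs_pos_ne; exact: rpos.
    move=> r [r0 hr]; rewrite leNgt; apply/negP => er.
    have := Mfun_mono a e' r a01 (ltW er); rewrite MfunE // => h.
    have := le_lt_trans h hr; rewrite lte_fin => h'.
    have hmn : m%:R^-1 <= n.+1%:R^-1 :> R.
      rewrite lef_pV2 ?posrE ?ltr0n ?ler_nat //.
        by rewrite /m -addn1 leq_add2l m1_pos.
      by rewrite /m addn_gt0 m1_pos orbT.
    have := hN n Nn => /= h3.
    by have := lt_trans (lt_le_trans h' hmn) h3; rewrite ltxx.
  rewrite sub0r normrN ger0_norm; last exact: ltW (rpos n).
  apply: le_lt_trans le _; apply: (@le_lt_trans _ _ (e / 2)).
    by rewrite ge_min lexx.
  by lra.
split => //.
apply/cvgrPdist_lt => e e0.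
have /cvgrPdist_lt/(_ e e0)/near0r_elim [dd dd0 hdd] := lp.
have [N _ hN] := cvgr_lt _ rcvg _ dd0.
exists N => // n /= Nn; apply: hdd; [exact: rpos | exact: hN].
Qed.

End alpha.

Lemma main_iff : lebesgue_point dist mu eta x <->
  exists alpha : R, [/\ 0 < alpha, alpha < 1 &
    exists rho : nat -> R,
      is_alpha_sequence dist mu eta x alpha Rad rho /\ lebesgue_point_along dist mu eta x rho].
Proof.
split.
- move=> lp.
  have a0 : 0 < 2^-1 :> R by rewrite invr_gt0.
  have a1 : 2^-1 < 1 :> R by rewrite invf_lt1 // ltr1n.
  have a01 : (0 < 2^-1 :> R) && (2^-1 < 1 :> R) by rewrite a0 a1.
  have MR := Mr_gt0 2^-1 Rad Rad0 (lexx _).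
  have [R1 [R10 R1R hR1]] := Mr_small 2^-1 _ a01 MR.
  exists 2^-1; split => //.
  exists (fun n => r_seq dist mu eta x 2^-1 (n + m_one dist mu eta x 2^-1 R1)).
  split; last by apply: forward.
  by exists R1; split => //; rewrite (MfunE _ Rad).
- move=> [al [al0 al1 [rho [[R1 [R10 R1R hM ->]] along]]]].
  by apply: backward along.
Qed.

End main.

Theorem mainTheorem14 (R : realType) (d : measure_display) (X : measurableType d)
  (dist : X -> X -> R) (mu : {measure set X -> \bar R}) (eta : X -> R)
  (x : X) (Rad : R) :
  is_metric dist ->
  borel_for dist ->
  measurable_fun setT eta ->
  (forall r : R, 0 < r -> (0 < mu (cball dist x r))%E) ->
  0 < Rad ->
  (mu (cball dist x Rad) < +oo)%E ->
  (\int[mu]_(y in cball dist x Rad) (`|eta y|)%:E < +oo)%E ->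
  mu [set x] = 0%E ->
  (forall r : R, 0 < r -> (0 < dev_int dist mu eta x r)%E) ->
  lebesgue_point dist mu eta x <->
  exists alpha : R, [/\ 0 < alpha, alpha < 1 &
    exists rho : nat -> R,
      is_alpha_sequence dist mu eta x alpha Rad rho /\ lebesgue_point_along dist mu eta x rho].
Proof.
move=> h1 h2 h3 h4 h5 h6 h7 h8 h9.
apply: main_iff => //.
Qed.
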